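(* Let $a,b$ be positive integers and let $d=\gcd(a,b)$. If $a$ divides $b$ or $b$ divides $a$, then $\Gamma(a,b)=1$. Otherwise: (1) if $a/d$ is odd, then $\Gamma(a,b)=1$ if and only if $\Theta(b,a)$ is odd; (2) if $a/d$ is even, then $\Gamma(a,b)=1$ if and only if $\Theta(a,b)$ is odd.
   Context: For relatively prime positive integers $p,q$, exactly one of the equations $px+qy=\frac{(p-1)(q-1)}{2}$ (Equation 1) and $px+qy+1=\frac{(p-1)(q-1)}{2}$ (Equation 2) has a solution in nonnegative integers $(x,y)$. For positive integers $a,b$ with $d=\gcd(a,b)$, $\Gamma(a,b)=1$ if Equation 1 with $(p,q)=(a/d,b/d)$ has a nonnegative integer solution, and $\Gamma(a,b)=2$ otherwise. For positive integers $a,b$ with $d=\gcd(a,b)$ and $b/d>1$, $\Theta(a,b)$ denotes the unique integer with $0<\Theta(a,b)<b/d$ and $(a/d)\Theta(a,b)\equiv 1 \pmod{b/d}$. *)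

(* Defs.v *)
From mathcomp Require Import all_boot.
Set Implicit Arguments. Unset Strict Implicit. Unset Printing Implicit Defensive.

(* Right-hand side (p-1)(q-1)/2 of Equation 1; for coprime p,q one of them
   is odd, so (p-1)(q-1) is even and nat division by 2 is exact. *)
Definition rhs (p q : nat) : nat := ((p - 1) * (q - 1)) %/ 2.

(* Equation 1 p x + q y = (p-1)(q-1)/2 has a solution in nonnegative integers.
   Any solution has x, y <= rhs p q (since p, q >= 1), so the search is
   exhaustive. *)
Definition eq1_solvable (p q : nat) : bool :=
  has (fun x => has (fun y => p * x + q * y == rhs p q) (iota 0 (rhs p q).+1))
      (iota 0 (rhs p q).+1).

Definition Gamma (a b : nat) : nat :=
  let d := gcdn a b in
  if eq1_solvable (a %/ d) (b %/ d) then 1 else 2.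

(* Theta a b: the unique t with 0 < t < b/d and (a/d) t = 1 mod (b/d),
   meaningful when b/d > 1 (computed as the first such t). *)
Definition Theta (a b : nat) : nat :=
  let d := gcdn a b in
  head 0 [seq t <- iota 1 (b %/ d).-1 | (a %/ d) * t == 1 %[mod b %/ d]].

(* Main.v *)
Require Import Defs.
From mathcomp Require Import all_boot.
From mathcomp Require Import zify.

Lemma solvE p q : 0 < p -> 0 < q ->
  eq1_solvable p q <-> exists x y, p * x + q * y = rhs p q.
Proof.
move=> hp hq; rewrite /eq1_solvable; split.
  case/hasP=> x _ /hasP [y _ /eqP e]; by exists x, y.
case=> x [y e]; apply/hasP; exists x.
  by rewrite mem_iota; apply/andP; split => //; rewrite add0n ltnS; nia.
apply/hasP; exists y; last by apply/eqP.
by rewrite mem_iota; apply/andP; split => //; rewrite add0n ltnS; nia.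
Qed.

Lemma rhs2 p q : odd q -> 2 * rhs p q = (p - 1) * (q - 1).
Proof.
move=> hq; rewrite /rhs.
have := odd_double_half q; rewrite hq -muln2 => e.
have -> : (p - 1) * (q - 1) = ((p - 1) * q./2) * 2 by lia.
by rewrite mulnK // mulnC.
Qed.

Lemma aux1 P Q x y r : 1 < P -> 1 < Q -> 2 * r = (P - 1) * (Q - 1) ->
  P * x + Q * y = r -> P * (2 * x + 1) + Q * (2 * y + 1) = Q * P + 1.
Proof. move=> hP hQ r2 e.
have : (P - 1) * (Q - 1) + P + Q = Q * P + 1.
  clear r2 e; case: P hP => // P _; case: Q hQ => // Q _. rewrite !subn1 /=. nia.
nia. Qed.

Lemma aux2 P Q x y : 1 < Q -> P * (2 * x + 1) + Q * (2 * y + 1) = Q * P + 1 -> 2 * x + 1 < Q.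
Proof. move=> hQ e2. rewrite ltnNge; apply/negP => h.
have := leq_mul2l P Q (2*x+1). rewrite h orbT => h2. nia. Qed.

Lemma aux3 P Q t k : t < Q -> P * t = k * Q + 1 -> k < P.
Proof. move=> tQ e. rewrite ltnNge; apply/negP => h.
have := leq_mul2r Q P k; rewrite h orbT => h2.
have := leq_mul2l P t Q; rewrite (ltnW tQ) orbT => h3. nia. Qed.
Lemma aux4 P Q u v k : 1 < Q -> P * (2 * u + 1) = k * Q + 1 -> P - k = 2 * v + 1 ->
  2 * (P * u + Q * v) = (P - 1) * (Q - 1).
Proof. move=> hQ e e2. have eP : P = k + 2 * v + 1 by lia. subst P. case: Q hQ e => // Q _ e. rewrite subn1 /= addn1 subn1 /=.
 nia. Qed.

Lemma core P Q t : 1 < P -> 1 < Q -> coprime P Q -> odd Q ->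
  0 < t -> t < Q -> P * t %% Q = 1 ->
  (exists x y, P * x + Q * y = rhs P Q) <-> odd t.
Proof.
move=> hP hQ cPQ oQ t0 tQ ht.
have r2 := @rhs2 P Q oQ.
have cQP : coprime Q P by rewrite coprime_sym.
split.
  case=> x [y e].
  have e2 := @aux1 P Q x y _ hP hQ r2 e.
  have m1 : P * (2 * x + 1) %% Q = 1.
    have := congr1 (modn^~ Q) e2 => /=.
    rewrite addnC [Q * (_ + _)]mulnC modnMDl [Q * P]mulnC addnC modnMDl (@modn_small 1) //.
  have lt := @aux2 P Q x y hQ e2.
  have : (P * (2 * x + 1) == P * t %[mod Q]) by rewrite m1 ht.
  case: (leqP t (2 * x + 1)) => le.
    rewrite eqn_mod_dvd; last by rewrite leq_mul2l le orbT.
    rewrite -mulnBr Gauss_dvdr // => /dvdn_leq.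
    have [e0|pos] := posnP (2 * x + 1 - t).
      move=> _; have -> : t = 2 * x + 1 by lia.
      by rewrite oddD oddM.
    by move=> /(_ isT) h; exfalso; lia.
  rewrite eq_sym eqn_mod_dvd; last by rewrite leq_mul2l ltnW ?orbT.
  rewrite -mulnBr Gauss_dvdr // => /dvdn_leq h; exfalso; have := h ltac:(lia); lia.
move=> ot.
have e := divn_eq (P * t) Q; rewrite ht in e.
set k := P * t %/ Q in e.
have kP : k < P by apply: (@aux3 P Q t k tQ); rewrite e addnC.
have opk : odd (P - k).
  rewrite oddB ?(ltnW kP) //.
  have := congr1 odd e; rewrite oddD oddM oddM ot oQ /= andbT addbT.
  by move=> ->; case: (odd k).
exists (t./2), ((P - k)./2).
have := odd_double_half t; rewrite ot /= -muln2 => et.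
have := odd_double_half (P - k); rewrite opk /= -muln2 => ek.
suff : 2 * (P * t./2 + Q * (P - k)./2) = 2 * rhs P Q by lia.
clearbody k; rewrite r2; apply: (@aux4 P Q _ _ k) => //; last by lia.
by rewrite -e; congr (_ * _); lia.
Qed.

Lemma head_spec p q : 1 < q -> coprime p q ->
  let t := head 0 [seq t <- iota 1 q.-1 | p * t == 1 %[mod q]] in
  0 < t < q /\ p * t %% q = 1.
Proof.
move=> hq cpq /=.
have p0 : 0 < p.
  case: p cpq => // ; rewrite /coprime gcd0n => /eqP q1; lia.
case: (egcdnP q p0) => km kn e _.
rewrite (eqP cpq) in e.
set t0 := km %% q.
have ht0 : p * t0 %% q = 1.
  by rewrite /t0 modnMmr mulnC e modnMDl modn_small.
have t0pos : 0 < t0.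
  move: ht0; case: (posnP t0) => [->|//]; by rewrite muln0 mod0n.
have t0q : t0 < q by rewrite ltn_pmod //; lia.
have hin : t0 \in [seq t <- iota 1 q.-1 | p * t == 1 %[mod q]].
  rewrite mem_filter mem_iota ht0 (modn_small hq) eqxx /=; apply/andP; split => //; lia.
case: [seq t <- iota 1 q.-1 | p * t == 1 %[mod q]] hin (mem_filter (fun t => p * t == 1 %[mod q]) ^~ (iota 1 q.-1)) => // h s _ /(_ h).
rewrite mem_head /= mem_iota (modn_small hq) => /esym /andP [/eqP -> /andP [h1 h2]].
split => //; apply/andP; split => //; lia.
Qed.

Lemma theta_spec a b : 1 < b %/ gcdn a b -> coprime (a %/ gcdn a b) (b %/ gcdn a b) ->
  0 < Theta a b < b %/ gcdn a b /\ (a %/ gcdn a b) * Theta a b %% (b %/ gcdn a b) = 1.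
Proof. move=> h1 h2; have := @head_spec _ _ h1 h2; by rewrite /Theta /=. Qed.

Lemma eq1_sym p q : (exists x y, p * x + q * y = rhs p q) <-> (exists x y, q * x + p * y = rhs q p).
Proof.
rewrite /rhs mulnC; split; case=> x [y e]; exists y, x; by rewrite addnC.
Qed.

Theorem theorem1p1 (a b : nat) (ha : 0 < a) (hb : 0 < b) :
  let d := gcdn a b in
  ((a %| b) || (b %| a) -> Gamma a b = 1) /\
  (~~ (a %| b) -> ~~ (b %| a) ->
     (odd (a %/ d) -> (Gamma a b = 1 <-> odd (Theta b a))) /\
     (~~ odd (a %/ d) -> (Gamma a b = 1 <-> odd (Theta a b)))).
Proof.
move=> d.
have d0 : 0 < d by rewrite /d gcdn_gt0 ha.
have ea : a = a %/ d * d by rewrite divnK // dvdn_gcdl.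
have eb : b = b %/ d * d by rewrite divnK // dvdn_gcdr.
have hG : Gamma a b = 1 <-> eq1_solvable (a %/ d) (b %/ d).
  by rewrite /Gamma /= -/d; case: eq1_solvable.
have p0 : 0 < a %/ d by rewrite divn_gt0 // /d dvdn_leq // dvdn_gcdl.
have q0 : 0 < b %/ d by rewrite divn_gt0 // /d dvdn_leq // dvdn_gcdr.
have cpq : coprime (a %/ d) (b %/ d).
  rewrite /coprime; apply/eqP.
  have : gcdn (a %/ d) (b %/ d) * d = 1 * d by rewrite muln_gcdl -ea -eb mul1n.
  by move/eqP; rewrite eqn_pmul2r // => /eqP.
rewrite hG (@solvE _ _ p0 q0).
move: ea eb hG cpq p0 q0; rewrite /Theta gcdnC -/d.
set p := a %/ d; set q := b %/ d => ea eb hG cpq p0 q0.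
split.
  case/orP => h.
    have dp : d = a by rewrite /d; apply/gcdn_idPl.
    have p1 : p = 1 by rewrite /p dp divnn ha.
    by exists 0, 0; rewrite p1 /rhs subnn mul0n !muln0.
  have dq : d = b by rewrite /d gcdnC; apply/gcdn_idPl.
  have q1 : q = 1 by rewrite /q dq divnn hb.
  by exists 0, 0; rewrite q1 /rhs subnn !muln0.
move=> nab nba.
have p1 : 1 < p.
  case: (ltngtP p 1) => //; first lia.
  move=> e; case/negP: nab; by rewrite ea e mul1n /d dvdn_gcdr.
have q1 : 1 < q.
  case: (ltngtP q 1) => //; first lia.
  move=> e; case/negP: nba; by rewrite eb e mul1n /d dvdn_gcdl.
split => op.
  have cqp : coprime q p by rewrite coprime_sym.
  have [/andP [h1 h2] h3] := @head_spec q p p1 cqp.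
  by rewrite eq1_sym; apply: core.
have oq : odd q.
  rewrite -coprime2n; apply: (coprime_dvdl _ cpq); by rewrite dvdn2.
have [/andP [h1 h2] h3] := @head_spec p q q1 cpq.
by apply: core.
Qed.
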